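(* Let $a,b,c,d\in\mathbb C$ with $a\notin\mathbb Z$ and $d\notin\{0,-1,-2,\dots\}$. Then, as an identity of formal power series in $x,y$, $$\mathrm H_2(a,b,c;d;x,y)=F(a,b;d;x)\,{}_1F_1(c;1-a;-y)+\sum_{k=1}^\infty\sum_{l=1}^k\frac{(-1)^{k+l}(k-1)!}{(l-1)!\,l!\,(k-l)!}\,\frac{(b)_k(c)_l}{(1-a)_l(d)_k}\,x^ky^l\,F(a+k,b+k;d+k;x)\,{}_1F_1(c+l;1-a+l;-y).$$
   Context: Pochhammer symbol: $(\lambda)_k=\Gamma(\lambda+k)/\Gamma(\lambda)$ for every integer $k$ (possibly negative) whenever defined; $(\lambda)_0=1$. $F(a,b;c;x)=\sum_{k\ge0}\frac{(a)_k(b)_k}{(c)_k k!}x^k$, ${}_1F_1(a;c;x)=\sum_{k\ge0}\frac{(a)_k}{(c)_k k!}x^k$. Confluent Horn function $\mathrm H_2(a,b,c;d;x,y)=\sum_{p,q\ge0}\frac{(a)_{p-q}(b)_p(c)_q}{(d)_p\,p!\,q!}x^py^q$. All functions are regarded as formal power series in $x,y$; the infinite double sum converges in the formal (degree) topology. *)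

(* Defs.v *)
(* Formal power series in two variables x, y over a field F
   are represented by their coefficient functions  s p q = [x^p y^q] s. *)
From HB Require Import structures.
From mathcomp Require Import all_boot all_order all_algebra.
Set Implicit Arguments. Unset Strict Implicit. Unset Printing Implicit Defensive.
Import Order.TTheory GRing.Theory Num.Theory.
Local Open Scope ring_scope.

Section Defs.
Variable F : fieldType.

Definition series := nat -> nat -> F.

Definition poch (l : F) (k : nat) : F := \prod_(i < k) (l + i%:R).

(* Pochhammer symbol for integer k, i.e. Gamma(l+k)/Gamma(l):
   for k = -(n+1) (Negz n) it is 1/((l-1)(l-2)...(l-(n+1))). *)
Definition pochz (l : F) (k : int) : F :=
  match k with
  | Posz n => poch l n
  | Negz n => (\prod_(i < n.+1) (l - (i.+1)%:R))^-1
  end.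

Definition sadd (s t : series) : series := fun p q => s p q + t p q.
Definition smul (s t : series) : series := fun p q =>
  \sum_(i < p.+1) \sum_(j < q.+1) s i j * t (p - i)%N (q - j)%N.
Definition sscale (r : F) (s : series) : series := fun p q => r * s p q.
Definition smono (k l : nat) : series := fun p q =>
  if (p == k) && (q == l) then 1 else 0.

(* Formal (degree-topology) sum of a family T k l of series such that
   T k l is divisible by x^k y^l (so only finitely many terms contribute
   to each coefficient): coefficient of x^p y^q. *)
Definition fsum2 (T : nat -> nat -> series) : series := fun p q =>
  \sum_(k < p.+1) \sum_(l < q.+1) T k l p q.

Definition F21x (a b c : F) : series := fun p q =>
  if q == 0%N then poch a p * poch b p / (poch c p * p`!%:R) else 0.

Definition F11my (a c : F) : series := fun p q =>
  if p == 0%N then poch a q / (poch c q * q`!%:R) * (-1) ^+ q else 0.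

Definition H2 (a b c d : F) : series := fun p q =>
  pochz a (p%:Z - q%:Z) * poch b p * poch c q / (poch d p * p`!%:R * q`!%:R).

Definition H2term (a b c d : F) (k l : nat) : series :=
  if (1 <= l)%N && (l <= k)%N then
    sscale ((-1) ^+ (k + l) * (k.-1)`!%:R / ((l.-1)`!%:R * l`!%:R * (k - l)`!%:R)
              * (poch b k * poch c l) / (poch (1 - a) l * poch d k))
      (smul (smono k l)
         (smul (F21x (a + k%:R) (b + k%:R) (d + k%:R))
               (F11my (c + l%:R) (1 - a + l%:R))))
  else fun _ _ => 0.

End Defs.

(* Main.v *)
Require Import Defs.
From HB Require Import structures.
From mathcomp Require Import all_boot all_order all_algebra.
From mathcomp Require Import ring zify.
From Stdlib Require Import FunctionalExtensionality.
Import Order.TTheory GRing.Theory Num.Theory.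
Local Open Scope ring_scope.

Section H.
Variable F : fieldType.
Implicit Types (x u : F).

Lemma poch0 x : poch x 0 = 1.
Proof. by rewrite /poch big_ord0. Qed.

Lemma pochSr x n : poch x n.+1 = poch x n * (x + n%:R).
Proof. by rewrite /poch big_ord_recr. Qed.

Lemma pochSl x n : poch x n.+1 = x * poch (x + 1) n.
Proof.
rewrite /poch big_ord_recl /= addr0; congr (_ * _).
by apply: eq_bigr => i _; rewrite /bump /= add1n -natr1 addrA addrAC.
Qed.

Lemma poch_add x m n : poch x (m + n) = poch x m * poch (x + m%:R) n.
Proof.
elim: n => [|n IH]; first by rewrite addn0 poch0 mulr1.
by rewrite addnS !pochSr IH natrD addrA mulrA.
Qed.

Lemma poch_neq0 x n : (forall i, (i < n)%N -> x + i%:R != 0) -> poch x n != 0.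
Proof. by move=> H; apply/prodf_neq0 => i _; apply: H. Qed.

Lemma poch_rev x n : poch (x - n%:R) n = \prod_(i < n) (x - i.+1%:R).
Proof.
elim: n x => [|n IH] x; first by rewrite poch0 big_ord0.
rewrite pochSl big_ord_recr /= mulrC.
have -> : x - n.+1%:R + 1 = x - n%:R by rewrite -natr1; ring.
by rewrite IH.
Qed.

Lemma poch_refl x n : poch (1 - x) n = (-1) ^+ n * \prod_(i < n) (x - i.+1%:R).
Proof.
elim: n => [|n IH]; first by rewrite poch0 big_ord0 mulr1.
rewrite pochSr IH big_ord_recr /= exprS -natr1; ring.
Qed.

Definition ff u k := \prod_(i < k) (u - i%:R).

Lemma ffS u k : ff u k.+1 = ff u k * (u - k%:R).
Proof. by rewrite /ff big_ord_recr. Qed.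

Lemma ff0 u : ff u 0 = 1.
Proof. by rewrite /ff big_ord0. Qed.

Lemma vander_ff u p : forall x, poch (x + u) p =
  \sum_(k < p.+1) 'C(p, k)%:R * ff u k * poch (x + k%:R) (p - k).
Proof.
elim: p => [|p IH] x.
  by rewrite big_ord1 /= poch0 ff0 addr0 poch0 !mulr1.
rewrite pochSl.
have -> : x + u + 1 = (x + 1) + u by ring.
rewrite IH big_distrr /=.
have E : forall k : 'I_p.+1, (x + u) * ('C(p, k)%:R * ff u k * poch (x + 1 + k%:R) (p - k))
   = 'C(p, k)%:R * ff u k * poch (x + k%:R) (p.+1 - k)
     + 'C(p, k)%:R * ff u k.+1 * poch (x + k.+1%:R) (p - k).
  move=> k; rewrite ffS (@subSn k p (ltn_ord k)) pochSl -natr1.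
  have -> : x + k%:R + 1 = x + 1 + k%:R by ring.
  have -> : x + (k%:R + 1) = x + 1 + k%:R by ring.
  ring.
rewrite (eq_bigr _ (fun k _ => E k)) big_split /=.
rewrite [in RHS]big_ord_recl /= bin0 ff0 subn0 addr0 mul1r.
rewrite [X in X + _ = _]big_ord_recl /= bin0 ff0 subn0 addr0 mul1r.
rewrite !mul1r -addrA; congr (_ + _).
under [in RHS]eq_bigr => i _ do rewrite /bump /= add1n binS natrD mulrDl mulrDl subSS.
rewrite big_split /=; congr (_ + _).
  rewrite [in RHS]big_ord_recr /= bin_small // !mul0r addr0.
  by apply: eq_bigr => i _; rewrite /bump /= add1n subSS.
Qed.

Lemma ff_neg (q k : nat) : ff (- q%:R) k = (-1) ^+ k * ('C((q + k).-1, k) * k`!)%:R :> F.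
Proof.
elim: k => [|k IH]; first by rewrite ff0 bin0 mulr1.
rewrite ffS IH addnS /= factS mulnCA mulnA -mul_bin_diag natrM natrM natrM exprS.
rewrite natrD; ring.
Qed.

End H.

Lemma sum_widen (G : nat -> nat) n m : (n <= m)%N -> (forall j, (n <= j < m)%N -> G j = 0%N) ->
  (\sum_(j < n) G j = \sum_(j < m) G j)%N.
Proof.
elim: m => [|m IH] le H.
  by move: le; rewrite leqn0 => /eqP ->.
case: (ltnP n m.+1) => h.
  rewrite IH //; last by move=> j /andP[a b]; apply: H; rewrite a ltnW.
  by rewrite big_ord_recr (H m) ?h ?leqnn // Monoid.mulm1.
by have -> : n = m.+1 by apply/eqP; rewrite eqn_leq le h.
Qed.

Lemma lsum (q k : nat) : (0 < k)%N ->
  (\sum_(l < q.+1) (if (1 <= l) && (l <= k) then 'C(q, l) * 'C(k.-1, l.-1) else 0))%N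
  = 'C(q + k.-1, k).
Proof.
move=> k0; rewrite -binomial.Vandermonde.
pose H' j := if (j <= k)%N then ('C(q, j) * 'C(k.-1, k - j))%N else 0%N.
have -> : (\sum_(j < k.+1) 'C(q, j) * 'C(k.-1, k - j) = \sum_(j < k.+1) H' j)%N.
  by apply: eq_bigr => j _; rewrite /H' -ltnS ltn_ord.
rewrite (@sum_widen H' k.+1 (q + k).+1) ?ltnS ?leq_addl //; last first.
  by move=> j /andP[a b]; rewrite /H' leqNgt a.
rewrite (@sum_widen (fun l => if (1 <= l) && (l <= k) then 'C(q, l) * 'C(k.-1, l.-1) else 0)%N q.+1 (q + k).+1) ?ltnS ?leq_addr //; last first.
  by move=> j /andP[a b]; rewrite bin_small // mul0n if_same.
apply: eq_bigr => j _; rewrite /H'.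
case: j => [[|j] hj] /=.
  by rewrite subn0 (@bin_small k.-1 k) ?muln0 ?if_same // ltn_predL.
case: (ltnP j k) => h //.
have -> : (k - j.+1 = k.-1 - j)%N by lia.
by rewrite bin_sub //; lia.
Qed.

Lemma identD (F : fieldType) (a : F) p q : poch (a - q%:R) p = poch a p +
  \sum_(k < p.+1) \sum_(l < q.+1) (if ((1 <= l) && (l <= k))%N then
     (-1) ^+ k * (p ^_ k * 'C(q, l) * 'C(k.-1, l.-1))%:R * poch (a + k%:R) (p - k) else 0).
Proof.
rewrite vander_ff big_ord_recl [in RHS]big_ord_recl /= bin0 ff0 subn0 addr0 !mul1r.
rewrite [X in _ = _ + (X + _)]big1 ?add0r; last by move=> l _; case: l => [[|l] hl].
congr (_ + _); apply: eq_bigr => i _; rewrite /bump /= add1n.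
rewrite (eq_bigr (fun l : 'I_q.+1 => (-1) ^+ i.+1 * (p ^_ i.+1)%:R * poch (a + i.+1%:R) (p - i.+1)
   * (if ((1 <= l) && (l <= i.+1))%N then 'C(q, l) * 'C(i, l.-1) else 0)%N%:R)); last first.
  by move=> l _; case: ifP => _; rewrite ?mulr0 // !natrM; ring.
rewrite -big_distrr /= -natr_sum lsum // ff_neg addnS /= -bin_ffact !natrM; ring.
Qed.

Lemma natz_R (F : fieldType) (n : nat) : (n%:Z)%:~R = n%:R :> F.
Proof. by []. Qed.

Lemma prod_shift_neq0 (F : fieldType) (a : F) n : (forall z : int, a != z%:~R) ->
  \prod_(i < n) (a - i.+1%:R) != 0.
Proof.
move=> ha; apply/prodf_neq0 => i _; rewrite subr_eq0.
exact: (ha (i.+1)%:Z).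
Qed.

Lemma lemC (F : fieldType) (a : F) p q : (forall z : int, a != z%:~R) ->
  pochz a (p%:Z - q%:Z) * poch (1 - a) q = (-1) ^+ q * poch (a - q%:R) p.
Proof.
move=> ha; case: (leqP q p) => h.
  rewrite subzn //= poch_refl -poch_rev -[in RHS](subnKC h) poch_add subrK; ring.
have Hz : (p%:Z - q%:Z) = Negz (q - p).-1.
  by rewrite NegzE prednK ?subn_gt0 // -subzn ?(ltnW h) // opprB.
have E : poch (a - q%:R) q = poch (a - q%:R) p * poch (a - (q - p)%N%:R) (q - p)%N.
  rewrite -{2}(subnKC (ltnW h)) poch_add; congr (_ * poch _ _).
  by rewrite natrB ?(ltnW h) //; ring.
rewrite Hz /= prednK ?subn_gt0 // poch_refl -poch_rev E.
have := @prod_shift_neq0 _ a (q - p)%N ha.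
by rewrite -poch_rev => nz; field.
Qed.

Lemma sum_delta (F : fieldType) (n k : nat) (G : nat -> F) :
  \sum_(i < n) (if (i == k :> nat) then G i else 0) = if (k < n)%N then G k else 0.
Proof.
elim: n => [|n IH]; first by rewrite big_ord0.
rewrite big_ord_recr IH /=.
case: (ltngtP k n) => h.
- by rewrite (ltn_trans h (ltnSn n)) addr0.
- by rewrite addr0 ltnS leqNgt h.
- by rewrite add0r h ltnSn.
Qed.

Lemma smul_mono (F : fieldType) k l (s : series F) p q :
  smul (smono F k l) s p q = if (k <= p)%N && (l <= q)%N then s (p - k)%N (q - l)%N else 0.
Proof.
rewrite /smul /smono.
rewrite (eq_bigr (fun i : 'I_p.+1 => if (i == k :> nat) then
   \sum_(j < q.+1) (if (j == l :> nat) then s (p - i)%N (q - j)%N else 0) else 0)); last first.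
  move=> i _; case: eqP => hi /=.
    by apply: eq_bigr => j _; case: eqP => _; rewrite ?mul1r ?mul0r.
  by apply: big1 => j _; rewrite mul0r.
rewrite (@sum_delta _ _ _ (fun i => \sum_(j < q.+1) (if (j == l :> nat) then s (p - i)%N (q - j)%N else 0))).
rewrite (@sum_delta _ _ _ (fun j => s (p - k)%N (q - j)%N)).
by rewrite !ltnS; case: (k <= p)%N.
Qed.

Lemma smul_F (F : fieldType) (al be ga mu nu : F) p q :
  smul (F21x al be ga) (F11my mu nu) p q = F21x al be ga p 0 * F11my mu nu 0 q.
Proof.
rewrite /smul big_ord_recr /= big1 ?add0r; last first.
  move=> i _; apply: big1 => j _.
  by rewrite /F11my subn_eq0 leqNgt ltn_ord /= mulr0.
rewrite big_ord_recl /= subnn subn0 big1 ?addr0 // => j _.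
by rewrite /F21x /= mul0r.
Qed.

Lemma poch_split (F : fieldType) (x : F) m n : (m <= n)%N ->
  poch x n = poch x m * poch (x + m%:R) (n - m).
Proof. by move=> h; rewrite -{1}(subnKC h) poch_add. Qed.

Theorem mainTheorem4 (F : fieldType) (charF0 : [pchar F] =i pred0)
  (a b c d : F)
  (ha : forall z : int, a != z%:~R)
  (hd : forall n : nat, d != - n%:R) :
  H2 a b c d =
  sadd (smul (F21x a b d) (F11my c (1 - a))) (fsum2 (H2term a b c d)).
Proof.
have natn0 : forall n, (0 < n)%N -> n%:R != 0 :> F.
  by move=> n; move/pcharf0P: charF0 => ->; rewrite -lt0n.
have factn0 : forall n, n`!%:R != 0 :> F by move=> n; apply: natn0; apply: fact_gt0.
have pd : forall k n, poch (d + k%:R) n != 0.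
  move=> k n; apply: poch_neq0 => i _; rewrite -addrA -natrD addr_eq0; exact: hd.
have pd0 : forall n, poch d n != 0.
  by move=> n; have := pd 0%N n; rewrite addr0.
have pa : forall k n, poch (1 - a + k%:R) n != 0.
  move=> k n; apply: poch_neq0 => i _.
  rewrite -addrA -natrD addrC addrA subr_eq0 eq_sym.
  have := ha (k + i).+1%:Z; by rewrite natz_R -addn1 natrD addrC.
have pa0 : forall n, poch (1 - a) n != 0.
  by move=> n; have := pa 0%N n; rewrite addr0.
apply: functional_extensionality => p; apply: functional_extensionality => q.
rewrite /sadd smul_F /fsum2.
set K := poch b p * poch c q / (poch d p * poch (1 - a) q * p`!%:R * q`!%:R) * (-1) ^+ q.
have LHS : H2 a b c d p q = K * poch (a - q%:R) p.
  have := @lemC _ a p q ha; rewrite /H2 /K => E.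
  have -> : pochz a (p%:Z - q%:Z) = (-1) ^+ q * poch (a - q%:R) p / poch (1 - a) q.
    by rewrite -E mulfK.
  by field; rewrite !factn0 pa0 pd0.
have First : F21x a b d p 0 * F11my c (1 - a) 0 q = K * poch a p.
  rewrite /F21x /F11my /K /=; field; by rewrite !factn0 pa0 pd0.
rewrite LHS identD mulrDr First; congr (_ + _).
rewrite big_distrr; apply: eq_bigr => k _; rewrite big_distrr; apply: eq_bigr => l _.
rewrite /H2term; case: ifP => hc /=; last by rewrite mulr0.
case/andP: hc => hl hlk.
have hkp : (k <= p)%N by rewrite -ltnS.
have hlq : (l <= q)%N by rewrite -ltnS.
rewrite /sscale smul_mono hkp hlq /= smul_F /F21x /F11my /= /K.
rewrite (@poch_split _ b _ _ hkp) (@poch_split _ d _ _ hkp) (@poch_split _ c _ _ hlq) (@poch_split _ (1 - a) _ _ hlq).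
have Hp : p`!%:R = (p ^_ k)%:R * (p - k)`!%:R :> F by rewrite -natrM ffact_fact.
have Hq : q`!%:R = 'C(q, l)%:R * (l`!%:R * (q - l)`!%:R) :> F by rewrite -!natrM bin_fact.
have Hk : (k.-1)`!%:R = 'C(k.-1, l.-1)%:R * ((l.-1)`!%:R * (k - l)`!%:R) :> F.
  have e : (k - l = k.-1 - l.-1)%N by lia.
  by rewrite -!natrM e bin_fact //; lia.
have Hs : (-1) ^+ (k + l) * (-1) ^+ (q - l) = (-1) ^+ q * (-1) ^+ k :> F.
  by rewrite -!exprD; congr (_ ^+ _); lia.
rewrite Hp Hq Hk !natrM exprD (exprB hlq) ?unitrN1 //.
field.
by rewrite signr_eq0 !factn0 !pa !pd pd0 pa0 !natn0 ?bin_gt0 ?ffact_gt0.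
Qed.
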